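(* Let $L\subseteq\mathcal{L}$ satisfy \[\forall e\in L:\quad\sum_{\{e'\in L\setminus\{e\}:d_{e'}\ge d_e\}}\big(\bar a_e(e')+\bar a_{e'}(e)\big)\le1.\] Then there exists $J\subseteq L$ such that $|J|\ge|L|/2$ and $\sum_{e'\in J\setminus\{e\}}\bar a_{e'}(e)\le3$ for every $e\in J$.
   Context: Constants $\alpha\ge0,N>0,\beta>0$. A link is $e=(s_e,r_e,P_e)$ with transmitter, receiver (points in the plane) and power $P_e>0$; $\mathcal{L}$ is the set of links. $d_e=d(s_e,r_e)$, $d_{e'e}=d(s_{e'},r_e)$, $S_e=P_e/d_e^\alpha$, $S_{e'e}=P_{e'}/d_{e'e}^\alpha$, $\gamma_e=\beta S_e/(S_e-\beta N)$, $a_{e'}(e)=\gamma_eS_{e'e}/S_e$, $\bar a_{e'}(e)=\min\{1,a_{e'}(e)\}$. *)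

(* Defs.v *)
From mathcomp Require Import all_boot all_order all_algebra.
From mathcomp Require Import reals exp.
Set Implicit Arguments. Unset Strict Implicit. Unset Printing Implicit Defensive.
Import Order.TTheory GRing.Theory Num.Theory.
Local Open Scope ring_scope.

Section Defs.
Variable R : realType.

Definition point := (R * R)%type.

Definition dist (p q : point) : R :=
  Num.sqrt ((p.1 - q.1) ^+ 2 + (p.2 - q.2) ^+ 2).

Definition link := (point * point * R)%type.
Definition sender (e : link) : point := e.1.1.
Definition receiver (e : link) : point := e.1.2.
Definition power (e : link) : R := e.2.

Variables (alpha N beta : R).

Definition len (e : link) : R := dist (sender e) (receiver e).
Definition cross_dist (e' e : link) : R := dist (sender e') (receiver e).
Definition signal (e : link) : R := power e / powR (len e) alpha.
Definition cross_signal (e' e : link) : R := power e' / powR (cross_dist e' e) alpha.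
Definition gamma (e : link) : R := beta * signal e / (signal e - beta * N).
Definition affect (e' e : link) : R := gamma e * cross_signal e' e / signal e.
Definition affect_bar (e' e : link) : R := Num.min 1 (affect e' e).

End Defs.

(* Main.v *)
Require Import Defs.
From mathcomp Require Import all_boot all_order all_algebra.
From mathcomp Require Import reals exp lra.
Import Order.TTheory GRing.Theory Num.Theory.
Local Open Scope ring_scope.

Theorem lemma8 (R : realType) (alpha N beta : R)
  (halpha : 0 <= alpha) (hN : 0 < N) (hbeta : 0 < beta)
  (L : seq (link R)) (Luniq : uniq L)
  (hP : forall e, e \in L -> 0 < power e)
  (hdist : forall e e', e \in L -> e' \in L -> 0 < cross_dist e' e)
  (hnoise : forall e, e \in L -> beta * N < signal alpha e)
  (hL : forall e, e \in L ->
     \sum_(e' <- L | (e' != e) && (len e <= len e'))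
        (affect_bar alpha N beta e e' + affect_bar alpha N beta e' e) <= 1) :
  exists J : seq (link R),
    [/\ uniq J, {subset J <= L}, (size L)%:R / 2 <= (size J)%:R :> R &
        forall e, e \in J ->
          \sum_(e' <- J | e' != e) affect_bar alpha N beta e' e <= 3].
set b := affect_bar alpha N beta.
have bge0 : forall e e', e \in L -> e' \in L -> 0 <= b e' e.
{ move=> e e' he he'; rewrite /b /affect_bar.
  have Sg : 0 < signal alpha e by apply: lt_trans (hnoise e he); apply: mulr_gt0.
  have Sd : 0 < signal alpha e - beta * N by rewrite subr_gt0 hnoise.
  have Cs : 0 < cross_signal alpha e' e.
  { by rewrite /cross_signal divr_gt0 ?hP // powR_gt0 // hdist. }
  rewrite le_min ler01 /affect /gamma; apply/ltW.
  apply: divr_gt0 => //; apply: mulr_gt0 => //; apply: divr_gt0 => //.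
  exact: mulr_gt0. }
set I := fun e => \sum_(e' <- L | e' != e) b e' e.
have Ige0 : forall e, e \in L -> 0 <= I e.
{ move=> e he; rewrite /I big_seq_cond; apply: sumr_ge0 => e' /andP[he' _].
  exact: bge0. }
have S2 : \sum_(e <- L) I e <= (size L)%:R.
{ apply: (@le_trans _ _ (\sum_(e <- L) \sum_(e' <- L)
     ((if (e' != e) && (len e <= len e') then b e' e else 0) +
      (if (e' != e) && (len e' <= len e) then b e' e else 0)))).
  { rewrite big_seq [X in _ <= X]big_seq; apply: ler_sum => e he.
    rewrite /I big_mkcond [X in _ <= X]big_seq big_seq; apply: ler_sum => e' he'.
    case: (e' != e) => /=; last by rewrite addr0.
    case: (lerP (len e) (len e')) => h /=.
    - by rewrite lerDl; case: ifP => // _; apply: bge0.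
    - by rewrite (ltW h) add0r. }
  rewrite (eq_bigr (fun e => \sum_(e' <- L)
     (if (e' != e) && (len e <= len e') then b e' e else 0) +
     \sum_(e' <- L) (if (e' != e) && (len e' <= len e) then b e' e else 0)));
    last by move=> e _; rewrite big_split.
  rewrite big_split /= [X in _ + X <= _]exchange_big /=.
  rewrite -big_split /=.
  apply: (@le_trans _ _ (\sum_(e <- L) 1)); last first.
    by rewrite -sum1_size natr_sum.
  rewrite big_seq [X in _ <= X]big_seq; apply: ler_sum => e he.
  apply: le_trans (hL e he); rewrite [X in _ <= X]big_mkcond -big_split /=.
  rewrite le_eqVlt; apply/orP; left; apply/eqP/eq_bigr => e' _; rewrite (eq_sym e e').
  by case: ((e' != e) && _); rewrite ?addr0 // addrC. }
pose J := [seq e <- L | I e <= 2].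
pose K := [seq e <- L | ~~ (I e <= 2)].
have hsz : (size J + size K)%N = size L.
  by rewrite !size_filter count_predC.
have hK : 2 * (size K)%:R <= (size L)%:R :> R.
{ apply: le_trans S2.
  rewrite (bigID (fun e => I e <= 2)) /=.
  apply: (@le_trans _ _ (\sum_(e <- L | ~~ (I e <= 2)) I e)); last first.
    rewrite lerDr big_seq_cond; apply: sumr_ge0 => e /andP[he _]; exact: Ige0.
  rewrite -big_filter -/K.
  have -> : 2 * (size K)%:R = \sum_(e <- K) (2:R).
    by rewrite -sum1_size natr_sum mulr_sumr; apply: eq_bigr => _ _; rewrite mulr1.
  rewrite big_seq [X in _ <= X]big_seq; apply: ler_sum => e.
  by rewrite mem_filter => /andP[h _]; apply: ltW; rewrite ltNge. }
exists J; split.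
- exact: filter_uniq.
- by move=> x; rewrite mem_filter => /andP[].
- rewrite -hsz natrD in hK *.
  rewrite ler_pdivrMr //; lra.
- move=> e; rewrite mem_filter => /andP[hIe he].
  apply: (@le_trans _ _ 2); last by lra.
  apply: le_trans hIe; rewrite /I big_filter_cond.
  rewrite big_mkcond [X in _ <= X]big_mkcond big_seq [X in _ <= X]big_seq.
  apply: ler_sum => e' he'; rewrite andbC.
  case: (e' != e) => //=; case: ifP => // _; exact: bge0.
Qed.
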